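(* 1. $\sup_{0\le x_1<\ell_\varepsilon}|\mu_\varepsilon(x_1)-\mu_0(x_1)|\to0$ as $\varepsilon\to0^+$. 2. There exist $\varepsilon_0>0$ and positive constants $C_1,C_2,C_3$ depending only on $\alpha,\kappa,\delta$ such that for every $0\le\varepsilon\le\varepsilon_0$ and every $x_1\in[0,\ell_\varepsilon)$: $$|\mu_\varepsilon(x_1)|\le C_1(1+x_1)^{-1/\alpha},\qquad |H_\varepsilon(\mu_\varepsilon(x_1))|\le C_2(1+x_1)^{-1-1/\alpha},\qquad |H_0'(\mu_\varepsilon(x_1))|\le C_3(1+x_1)^{-1}.$$
   Context: Fix $\kappa>0$, $\alpha>0$, $\delta<0$. For $\varepsilon\ge0$ let $H_\varepsilon(s)=\kappa|s|^{1+\alpha}+\varepsilon$, $\rho_\varepsilon(\xi_1)=\int_\delta^{\xi_1}ds/H_\varepsilon(s)$ for $\delta\le\xi_1<0$, $\ell_\varepsilon=\lim_{\xi_1\to0^-}\rho_\varepsilon(\xi_1)$ (finite for $\varepsilon>0$, $\ell_0=+\infty$), and $\mu_\varepsilon:=\rho_\varepsilon^{-1}:[0,\ell_\varepsilon)\to[\delta,0)$. Explicitly $\mu_0(x_1)=-(\alpha\kappa)^{-1/\alpha}(x_1+\hat x_1)^{-1/\alpha}$ with $\hat x_1=(\alpha\kappa)^{-1}|\delta|^{-\alpha}$. *)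

(* Defs.v *)
From Stdlib Require Import Reals ClassicalEpsilon.
From Coquelicot Require Import Coquelicot.
Open Scope R_scope.

(* |s|^a for real a > 0, with the convention 0^a = 0 (Stdlib's Rpower 0 a = 1). *)
Definition powabs (s a : R) : R :=
  if Req_EM_T s 0 then 0 else Rpower (Rabs s) a.

Definition H (kappa alpha eps s : R) : R := kappa * powabs s (1 + alpha) + eps.

Definition rho (kappa alpha delta eps xi : R) : R :=
  RInt (fun s => / H kappa alpha eps s) delta xi.

(* ell_eps = lim_{xi -> 0^-} rho_eps(xi), in the extended reals (+oo for eps = 0). *)
Definition ell (kappa alpha delta eps : R) : Rbar :=
  epsilon (inhabits p_infty)
    (fun l => filterlim (rho kappa alpha delta eps) (at_left 0) (Rbar_locally l)).

Definition mu (kappa alpha delta eps x : R) : R :=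
  epsilon (inhabits 0)
    (fun xi => delta <= xi < 0 /\ rho kappa alpha delta eps xi = x).

(* Main.v *)
Require Import Defs.
From Stdlib Require Import Reals Lra ClassicalEpsilon.
From Coquelicot Require Import Coquelicot.
Open Scope R_scope.

Lemma powabs_nz s a : s <> 0 -> powabs s a = Rpower (Rabs s) a.
Proof. intros h; unfold powabs; destruct (Req_EM_T s 0); [contradiction|auto]. Qed.

Lemma powabs_neg s a : s < 0 -> powabs s a = Rpower (- s) a.
Proof. intros h; rewrite powabs_nz by lra; rewrite Rabs_left; auto. Qed.

Lemma powabs_ge0 s a : 0 <= powabs s a.
Proof. unfold powabs; destruct (Req_EM_T s 0); [lra|]. unfold Rpower; left; apply exp_pos. Qed.

Lemma Rpower_pos x a : 0 < Rpower x a.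
Proof. unfold Rpower; apply exp_pos. Qed.

Lemma Rpower_one_base z : Rpower 1 z = 1.
Proof. unfold Rpower; rewrite ln_1, Rmult_0_r; apply exp_0. Qed.

Lemma locally_nz s : s <> 0 -> locally s (fun y : R => y <> 0).
Proof.
  intros hs. assert (h : 0 < Rabs s) by (apply Rabs_pos_lt; auto).
  exists (mkposreal _ h). intros y hy. unfold ball in hy; simpl in hy;
  unfold AbsRing_ball, abs, minus, plus, opp in hy; simpl in hy.
  intros ->. rewrite Rplus_0_l, Rabs_Ropp in hy. lra.
Qed.

Lemma cont_powabs a s : 1 <= a -> continuous (fun s => powabs s a) s.
Proof.
  intros ha. destruct (Req_EM_T s 0) as [->|hs].
  - apply continuity_pt_filterlim, continuity_pt_locally. intros eps.
    exists (mkposreal _ (Rmin_pos 1 eps Rlt_0_1 (cond_pos eps))).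
    intros y hy. unfold ball in hy; simpl in hy; unfold AbsRing_ball, abs, minus, plus, opp in hy; simpl in hy.
    replace (powabs 0 a) with 0 by (unfold powabs; destruct (Req_EM_T 0 0); lra).
    rewrite Ropp_0, Rplus_0_r in hy. rewrite Rminus_0_r.
    assert (h1 := Rmin_l 1 eps). assert (h2 := Rmin_r 1 eps).
    destruct (Req_EM_T y 0) as [->|hy0].
    + unfold powabs; destruct (Req_EM_T 0 0); [|lra]. rewrite Rabs_R0; apply cond_pos.
    + rewrite powabs_nz by auto. rewrite Rabs_pos_eq by (left; apply Rpower_pos).
      assert (hyp : 0 < Rabs y) by (apply Rabs_pos_lt; auto).
      replace a with (1 + (a - 1)) by ring. rewrite Rpower_plus, Rpower_1 by auto.
      assert (Rpower (Rabs y) (a - 1) <= 1).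
      { apply Rle_trans with (Rpower 1 (a-1)); [apply Rle_Rpower_l; lra | rewrite Rpower_one_base; lra]. }
      assert (0 < Rpower (Rabs y) (a - 1)) by apply Rpower_pos. nra.
  - apply (continuous_ext_loc _ (fun y => exp (a * ln (Rabs y)))).
    + generalize (locally_nz s hs). apply filter_imp. intros y hy. rewrite powabs_nz by auto. reflexivity.
    + apply continuous_exp_comp. apply (continuous_mult (fun _ => a) (fun y => ln (Rabs y))).
      * apply continuous_const.
      * apply (continuous_comp Rabs ln). apply continuous_Rabs. apply continuous_ln. apply Rabs_pos_lt; auto.
Qed.

Lemma H_pos kappa alpha eps s : 0 < kappa -> 0 <= eps -> (s <> 0 \/ 0 < eps) -> 0 < H kappa alpha eps s.
Proof.
  intros hk he hs. unfold H. destruct hs as [hs|hs].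
  - rewrite powabs_nz by auto. assert (0 < Rpower (Rabs s) (1 + alpha)) by apply Rpower_pos. nra.
  - assert (0 <= powabs s (1+alpha)) by apply powabs_ge0. nra.
Qed.

Lemma cont_f kappa alpha eps s : 0 < kappa -> 0 < alpha -> 0 <= eps -> (s <> 0 \/ 0 < eps) ->
  continuous (fun s => / H kappa alpha eps s) s.
Proof.
  intros hk ha he hs. apply continuous_Rinv_comp.
  - unfold H. apply (continuous_plus (fun s => kappa * powabs s (1 + alpha)) (fun _ => eps)).
    + apply (continuous_mult (fun _ => kappa) (fun s => powabs s (1 + alpha))).
      apply continuous_const. apply cont_powabs; lra.
    + apply continuous_const.
  - apply Rgt_not_eq, H_pos; auto.
Qed.

Lemma derive_pow_neg b x : x < 0 ->
  is_derive (fun s => Rpower (- s) b) x (- (b * Rpower (- x) (b - 1))).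
Proof.
  intros hx.
  assert (h1 : is_derive (fun y => Rpower y b) (- x) (b * Rpower (- x) (b - 1))).
  { apply is_derive_Reals, derivable_pt_lim_power; lra. }
  assert (h2 : is_derive (fun s : R => - s) x (-1)).
  { assert (h := is_derive_opp (fun t : R => t) x one (is_derive_id x)).
    exact h. }
  assert (h := is_derive_comp (fun y => Rpower y b) (fun s => - s) x _ _ h1 h2).
  simpl in h. unfold scal in h; simpl in h; unfold mult in h; simpl in h.
  replace (- (b * Rpower (- x) (b - 1))) with (-1 * (b * Rpower (- x) (b - 1))) by ring. exact h.
Qed.

Lemma exf kappa alpha eps a b : 0 < kappa -> 0 < alpha -> 0 <= eps ->
  ((a <= b /\ b < 0) \/ 0 < eps) -> ex_RInt (fun s => / H kappa alpha eps s) a b.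
Proof.
  intros hk ha he h. apply (ex_RInt_continuous (V:=R_CompleteNormedModule)). intros z hz. apply cont_f; auto.
  destruct h as [[h1 h2]|h]; [left|right; auto].
  rewrite Rmax_right in hz by lra. lra.
Qed.

Lemma RInt_lower f a b c : a <= b -> ex_RInt f a b -> (forall x, a < x < b -> c <= f x) ->
  c * (b - a) <= RInt f a b.
Proof.
  intros hab hex h. replace (c * (b - a)) with (RInt (fun _ => c) a b).
  apply RInt_le; auto. apply ex_RInt_const.
  rewrite RInt_const. unfold scal; simpl; unfold mult; simpl. ring.
Qed.

Lemma RInt_upper f a b c : a <= b -> ex_RInt f a b -> (forall x, a < x < b -> f x <= c) ->
  RInt f a b <= c * (b - a).
Proof.
  intros hab hex h. replace (c * (b - a)) with (RInt (fun _ => c) a b).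
  apply RInt_le; auto. apply ex_RInt_const.
  rewrite RInt_const. unfold scal; simpl; unfold mult; simpl. ring.
Qed.

Lemma rho_diff kappa alpha delta eps a b : 0 < kappa -> 0 < alpha -> 0 <= eps ->
  ((delta <= a <= b /\ b < 0) \/ 0 < eps) ->
  rho kappa alpha delta eps b - rho kappa alpha delta eps a = RInt (fun s => / H kappa alpha eps s) a b.
Proof.
  intros hk ha he h. unfold rho.
  rewrite <- (RInt_Chasles _ delta a b). unfold plus; simpl. ring.
  apply exf; auto; destruct h as [h|h]; [left; lra|auto].
  apply exf; auto; destruct h as [h|h]; [left; lra|auto].
Qed.

Lemma rho_delta kappa alpha delta eps : rho kappa alpha delta eps delta = 0.
Proof. unfold rho. rewrite RInt_point. reflexivity. Qed.

Lemma powabs_le_delta alpha delta s : 0 < alpha -> delta <= s <= 0 ->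
  powabs s (1 + alpha) <= Rpower (- delta) (1 + alpha).
Proof.
  intros ha hs. destruct (Req_EM_T s 0) as [->|hs0].
  - unfold powabs. destruct (Req_EM_T 0 0); [|lra]. left; apply Rpower_pos.
  - rewrite powabs_neg by lra. apply Rle_Rpower_l; lra.
Qed.

Lemma f_lower kappa alpha delta eps s : 0 < kappa -> 0 < alpha -> 0 <= eps -> delta <= s <= 0 ->
  (s <> 0 \/ 0 < eps) ->
  / (kappa * Rpower (- delta) (1 + alpha) + eps) <= / H kappa alpha eps s.
Proof.
  intros hk ha he hs hnz. apply Rinv_le_contravar. apply H_pos; auto.
  unfold H. assert (h := powabs_le_delta alpha delta s ha hs). nra.
Qed.

Lemma rho_strict kappa alpha delta eps a b : 0 < kappa -> 0 < alpha -> 0 <= eps ->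
  delta <= a <= b -> (b < 0 \/ (0 < eps /\ b <= 0)) ->
  (b - a) * / (kappa * Rpower (- delta) (1 + alpha) + eps)
    <= rho kappa alpha delta eps b - rho kappa alpha delta eps a.
Proof.
  intros hk ha he hab hb. rewrite rho_diff; auto.
  2:{ destruct hb as [hb|[hb _]]; [left; lra| right; auto]. }
  rewrite Rmult_comm. apply RInt_lower. lra.
  apply exf; auto. destruct hb as [hb|[hb _]]; [left; lra| right; auto].
  intros x hx. apply f_lower; auto. destruct hb as [hb|[hb1 hb2]]; lra.
  destruct hb as [hb|[hb1 hb2]]; [left; lra | right; auto].
Qed.

Lemma denom_pos kappa alpha delta eps : 0 < kappa -> 0 <= eps ->
  0 < kappa * Rpower (- delta) (1 + alpha) + eps.
Proof. intros. assert (0 < Rpower (- delta) (1 + alpha)) by apply Rpower_pos. nra. Qed.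

Lemma rho_le_rho0 kappa alpha delta eps xi : 0 < kappa -> 0 < alpha -> 0 <= eps ->
  delta <= xi < 0 -> rho kappa alpha delta eps xi <= rho kappa alpha delta 0 xi.
Proof.
  intros hk ha he hx. unfold rho. apply RInt_le. lra.
  apply exf; auto; left; lra. apply exf; auto; lra.
  intros x hxx. apply Rinv_le_contravar. apply H_pos; auto. lra. left; lra.
  unfold H. lra.
Qed.

Lemma rho0_formula kappa alpha delta xi : 0 < kappa -> 0 < alpha -> delta <= xi < 0 ->
  rho kappa alpha delta 0 xi = (Rpower (- xi) (- alpha) - Rpower (- delta) (- alpha)) / (alpha * kappa).
Proof.
  intros hk ha hx. unfold rho. apply is_RInt_unique.
  set (F := fun s => / (alpha * kappa) * Rpower (- s) (- alpha)).
  replace ((Rpower (- xi) (- alpha) - Rpower (- delta) (- alpha)) / (alpha * kappa))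
    with (minus (F xi) (F delta)) by (unfold F, minus, plus, opp; simpl; field; lra).
  apply (is_RInt_derive (V:=R_CompleteNormedModule)).
  - intros x hxx. rewrite Rmin_left in hxx by lra. rewrite Rmax_right in hxx by lra.
    assert (hd := is_derive_scal _ x (/ (alpha * kappa)) _ (derive_pow_neg (- alpha) x ltac:(lra))).
    unfold F. replace (/ H kappa alpha 0 x) with (/ (alpha * kappa) * - (- alpha * Rpower (- x) (- alpha - 1))).
    exact hd.
    unfold H. rewrite powabs_neg by lra. rewrite Rplus_0_r.
    replace (- alpha - 1) with (- (1 + alpha)) by ring. rewrite Rpower_Ropp.
    assert (0 < Rpower (- x) (1 + alpha)) by apply Rpower_pos. field. split; lra.
  - intros x hxx. rewrite Rmin_left in hxx by lra. rewrite Rmax_right in hxx by lra.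
    apply cont_f; auto; lra.
Qed.

Lemma rho_inj kappa alpha delta eps a b x : 0 < kappa -> 0 < alpha -> 0 <= eps ->
  delta <= a < 0 -> delta <= b < 0 -> rho kappa alpha delta eps a = x ->
  rho kappa alpha delta eps b = x -> a = b.
Proof.
  intros hk ha he h1 h2 e1 e2.
  assert (hc := denom_pos kappa alpha delta eps hk he).
  assert (0 < / (kappa * Rpower (- delta) (1 + alpha) + eps)) by (apply Rinv_0_lt_compat; auto).
  destruct (Rtotal_order a b) as [h|[h|h]]; auto.
  - assert (hh := rho_strict kappa alpha delta eps a b hk ha he ltac:(lra) ltac:(left; lra)).
    nra.
  - assert (hh := rho_strict kappa alpha delta eps b a hk ha he ltac:(lra) ltac:(left; lra)).
    nra.
Qed.

Lemma mu_char kappa alpha delta eps x xi : 0 < kappa -> 0 < alpha -> 0 <= eps ->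
  delta <= xi < 0 -> rho kappa alpha delta eps xi = x -> mu kappa alpha delta eps x = xi.
Proof.
  intros hk ha he hx hr. unfold mu.
  match goal with |- epsilon ?i ?P = _ => assert (hs := epsilon_spec i P (ex_intro _ xi (conj hx hr))) end.
  destruct hs as [h1 h2]. apply (rho_inj kappa alpha delta eps _ _ x hk ha he h1 hx h2 hr).
Qed.

Definition A0 kappa alpha delta x := alpha * kappa * x + Rpower (- delta) (- alpha).

Lemma A0_pos kappa alpha delta x : 0 < kappa -> 0 < alpha -> 0 <= x -> 0 < A0 kappa alpha delta x.
Proof. intros. unfold A0. assert (0 < Rpower (- delta) (- alpha)) by apply Rpower_pos.
  assert (0 <= alpha * kappa * x) by (apply Rmult_le_pos; [nra|lra]). lra. Qed.

Lemma mu0_explicit kappa alpha delta x : 0 < kappa -> 0 < alpha -> delta < 0 -> 0 <= x ->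
  mu kappa alpha delta 0 x = - Rpower (A0 kappa alpha delta x) (- / alpha).
Proof.
  intros hk ha hd hx. assert (hA := A0_pos kappa alpha delta x hk ha hx).
  set (A := A0 kappa alpha delta x) in *.
  assert (hle : Rpower (- delta) (- alpha) <= A).
  { unfold A, A0. assert (0 <= alpha * kappa * x) by (apply Rmult_le_pos; [nra|lra]). lra. }
  assert (hxi : delta <= - Rpower A (- / alpha) < 0).
  { split; [|assert (0 < Rpower A (- / alpha)) by apply Rpower_pos; lra].
    assert (e : - delta = Rpower (Rpower (- delta) (- alpha)) (- / alpha)).
    { rewrite Rpower_mult. replace (- alpha * - / alpha) with 1 by (field; lra). rewrite Rpower_1; lra. }
    assert (Rpower A (- / alpha) <= - delta); [|lra].
    rewrite e, (Rpower_Ropp A), (Rpower_Ropp (Rpower _ _) (/ alpha)). apply Rinv_le_contravar. apply Rpower_pos.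
    apply Rle_Rpower_l. left; apply Rinv_0_lt_compat; lra. split; [apply Rpower_pos|auto]. }
  apply mu_char; auto; try lra.
  rewrite rho0_formula; auto. rewrite Ropp_involutive, Rpower_mult.
  replace (- / alpha * - alpha) with 1 by (field; lra). rewrite Rpower_1 by auto.
  unfold A, A0. field. lra.
Qed.

Lemma rho_lip kappa alpha delta eps a b : 0 < kappa -> 0 < alpha -> 0 < eps ->
  Rabs (rho kappa alpha delta eps b - rho kappa alpha delta eps a) <= Rabs (b - a) / eps.
Proof.
  intros hk ha he.
  assert (hf : forall s, 0 <= / H kappa alpha eps s <= / eps).
  { intros s. assert (hp := H_pos kappa alpha eps s hk ltac:(lra) (or_intror he)). split.
    left; apply Rinv_0_lt_compat; auto. apply Rinv_le_contravar; auto.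
    unfold H. assert (0 <= powabs s (1 + alpha)) by apply powabs_ge0. nra. }
  destruct (Rle_or_lt a b) as [h|h].
  - rewrite rho_diff by (auto; lra). rewrite (Rabs_pos_eq (b - a)) by lra.
    unfold Rdiv. rewrite Rmult_comm.
    replace (/ eps * (b - a)) with ((b - a) * / eps) by ring.
    apply abs_RInt_le_const; auto. apply exf; auto; lra.
    intros t _. rewrite Rabs_pos_eq by apply hf. apply hf.
  - replace (rho kappa alpha delta eps b - rho kappa alpha delta eps a) with
      (- (rho kappa alpha delta eps a - rho kappa alpha delta eps b)) by ring.
    rewrite Rabs_Ropp, rho_diff by (auto; lra). rewrite (Rabs_left (b - a)) by lra.
    replace (- (b - a) / eps) with ((a - b) * / eps) by (field; lra).
    apply abs_RInt_le_const; auto. lra. apply exf; auto; lra.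
    intros t _. rewrite Rabs_pos_eq by apply hf. apply hf.
Qed.

Lemma rho_cont_pt kappa alpha delta eps c y : 0 < kappa -> 0 < alpha -> 0 < eps ->
  continuity_pt (fun t => rho kappa alpha delta eps t - c) y.
Proof.
  intros hk ha he. apply continuity_pt_locally. intros e.
  assert (hd : 0 < e * eps) by (apply Rmult_lt_0_compat; [apply cond_pos|auto]).
  exists (mkposreal _ hd). intros u hu. unfold ball in hu; simpl in hu;
  unfold AbsRing_ball, abs, minus, plus, opp in hu; simpl in hu.
  replace (rho kappa alpha delta eps u - c - (rho kappa alpha delta eps y - c)) with
     (rho kappa alpha delta eps u - rho kappa alpha delta eps y) by ring.
  eapply Rle_lt_trans. apply rho_lip; auto.
  apply Rmult_lt_reg_r with eps; auto. unfold Rdiv. rewrite Rmult_assoc, Rinv_l by lra.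
  rewrite Rmult_1_r. exact hu.
Qed.

Lemma lim_pos kappa alpha delta eps : 0 < kappa -> 0 < alpha -> 0 < eps ->
  filterlim (rho kappa alpha delta eps) (at_left 0) (Rbar_locally (Finite (rho kappa alpha delta eps 0))).
Proof.
  intros hk ha he. simpl.
  assert (hc : continuous (rho kappa alpha delta eps) 0).
  { apply continuity_pt_filterlim.
    assert (h := rho_cont_pt kappa alpha delta eps 0 0 hk ha he).
    eapply continuity_pt_ext; [|exact h]. intros; simpl; ring. }
  intros P hP. assert (hP2 := hc P hP). unfold filtermap, at_left, within in hP2 |- *.
  revert hP2. apply filter_imp. intros; auto.
Qed.

Lemma ell_spec kappa alpha delta eps : 0 < kappa -> 0 < alpha -> 0 < eps ->
  filterlim (rho kappa alpha delta eps) (at_left 0) (Rbar_locally (ell kappa alpha delta eps)).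
Proof.
  intros hk ha he. unfold ell.
  match goal with |- context [epsilon ?i ?P] => apply (epsilon_spec i P) end.
  eexists. apply lim_pos; auto.
Qed.

Lemma near_ell kappa alpha delta eps x : 0 < kappa -> 0 < alpha -> 0 < eps -> delta < 0 ->
  Rbar_lt (Finite x) (ell kappa alpha delta eps) ->
  exists xi, delta < xi < 0 /\ x < rho kappa alpha delta eps xi.
Proof.
  intros hk ha he hd hx.
  assert (h1 := ell_spec kappa alpha delta eps hk ha he _ (open_Rbar_gt' _ _ hx)).
  assert (h2 : at_left 0 (fun u => delta < u < 0)).
  { unfold at_left, within. assert (hd' : 0 < - delta) by lra. exists (mkposreal _ hd').
    intros u hu hu0. unfold ball in hu; simpl in hu;
    unfold AbsRing_ball, abs, minus, plus, opp in hu; simpl in hu.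
    rewrite Ropp_0, Rplus_0_r in hu. apply Rabs_def2 in hu. lra. }
  unfold filtermap in h1. destruct (filter_ex (F := at_left 0) _ (filter_and _ _ h1 h2)) as [xi [hr hxi]].
  exists xi. split; auto.
Qed.

Lemma mu_pos_spec kappa alpha delta eps x : 0 < kappa -> 0 < alpha -> 0 < eps -> delta < 0 ->
  0 <= x -> Rbar_lt (Finite x) (ell kappa alpha delta eps) ->
  delta <= mu kappa alpha delta eps x < 0 /\ rho kappa alpha delta eps (mu kappa alpha delta eps x) = x
  /\ exists xi', delta < xi' < 0 /\ x < rho kappa alpha delta eps xi'.
Proof.
  intros hk ha he hd hx hl.
  destruct (near_ell kappa alpha delta eps x hk ha he hd hl) as [xi' [hxi' hr]].
  assert (ex : exists xi, delta <= xi <= xi' /\ rho kappa alpha delta eps xi = x).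
  { destruct (Req_dec x 0) as [->|hx0].
    - exists delta. split. lra. apply rho_delta.
    - destruct (IVT (fun t => rho kappa alpha delta eps t - x) delta xi') as [z [hz1 hz2]].
      + intros y. apply rho_cont_pt; auto.
      + lra.
      + rewrite rho_delta. lra.
      + lra.
      + exists z. split; auto. lra. }
  destruct ex as [xi [h1 h2]].
  rewrite (mu_char kappa alpha delta eps x xi) by (auto; lra).
  split; [lra|]. split; auto. exists xi'; auto.
Qed.

Lemma Rpower_neg_anti u v c : 0 <= c -> 0 < u <= v -> Rpower v (- c) <= Rpower u (- c).
Proof.
  intros hc huv. rewrite !Rpower_Ropp. apply Rinv_le_contravar. apply Rpower_pos.
  apply Rle_Rpower_l; auto.
Qed.

Lemma mu0_spec kappa alpha delta x : 0 < kappa -> 0 < alpha -> delta < 0 -> 0 <= x ->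
  delta <= mu kappa alpha delta 0 x < 0 /\ rho kappa alpha delta 0 (mu kappa alpha delta 0 x) = x.
Proof.
  intros hk ha hd hx. rewrite mu0_explicit by auto.
  assert (hA := A0_pos kappa alpha delta x hk ha hx).
  set (A := A0 kappa alpha delta x) in *.
  assert (hle : Rpower (- delta) (- alpha) <= A).
  { unfold A, A0. assert (0 <= alpha * kappa * x) by (apply Rmult_le_pos; [nra|lra]). lra. }
  assert (hxi : delta <= - Rpower A (- / alpha) < 0).
  { split; [|assert (0 < Rpower A (- / alpha)) by apply Rpower_pos; lra].
    assert (e : - delta = Rpower (Rpower (- delta) (- alpha)) (- / alpha)).
    { rewrite Rpower_mult. replace (- alpha * - / alpha) with 1 by (field; lra). rewrite Rpower_1; lra. }
    assert (Rpower A (- / alpha) <= - delta); [|lra].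
    rewrite e. apply Rpower_neg_anti. left; apply Rinv_0_lt_compat; lra. split; [apply Rpower_pos|auto]. }
  split; auto.
  rewrite rho0_formula; auto. rewrite Ropp_involutive, Rpower_mult.
  replace (- / alpha * - alpha) with 1 by (field; lra). rewrite Rpower_1 by auto.
  unfold A, A0. field. lra.
Qed.

Lemma mu_ge_mu0 kappa alpha delta eps x xi : 0 < kappa -> 0 < alpha -> delta < 0 -> 0 <= eps -> 0 <= x ->
  delta <= xi < 0 -> rho kappa alpha delta eps xi = x -> mu kappa alpha delta 0 x <= xi.
Proof.
  intros hk ha hd he hx hxi hr.
  destruct (mu0_spec kappa alpha delta x hk ha hd hx) as [h0 e0].
  set (xi0 := mu kappa alpha delta 0 x) in *.
  destruct (Rle_or_lt xi0 xi) as [h|h]; auto. exfalso.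
  assert (hs := rho_strict kappa alpha delta 0 xi xi0 hk ha (Rle_refl 0) ltac:(lra) ltac:(left; lra)).
  assert (hl := rho_le_rho0 kappa alpha delta eps xi hk ha he hxi).
  assert (hc := denom_pos kappa alpha delta 0 hk (Rle_refl 0)).
  assert (0 < / (kappa * Rpower (- delta) (1 + alpha) + 0)) by (apply Rinv_0_lt_compat; auto).
  assert (0 < (xi0 - xi) * / (kappa * Rpower (- delta) (1 + alpha) + 0)) by (apply Rmult_lt_0_compat; lra).
  lra.
Qed.

Definition mm kappa alpha delta := Rmin (alpha * kappa) (Rpower (- delta) (- alpha)).

Lemma mm_pos kappa alpha delta : 0 < kappa -> 0 < alpha -> 0 < mm kappa alpha delta.
Proof. intros. unfold mm. apply Rmin_pos. nra. apply Rpower_pos. Qed.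

Lemma A0_ge kappa alpha delta x : 0 < kappa -> 0 < alpha -> 0 <= x ->
  mm kappa alpha delta * (1 + x) <= A0 kappa alpha delta x.
Proof.
  intros hk ha hx. unfold mm, A0.
  assert (h1 := Rmin_l (alpha * kappa) (Rpower (- delta) (- alpha))).
  assert (h2 := Rmin_r (alpha * kappa) (Rpower (- delta) (- alpha))).
  nra.
Qed.

Lemma A0_pow kappa alpha delta x c : 0 < kappa -> 0 < alpha -> 0 <= x -> 0 <= c ->
  Rpower (A0 kappa alpha delta x) (- c) <= Rpower (mm kappa alpha delta) (- c) * Rpower (1 + x) (- c).
Proof.
  intros hk ha hx hc. assert (hm := mm_pos kappa alpha delta hk ha).
  rewrite Rpower_mult_distr by lra. apply Rpower_neg_anti; auto.
  split. apply Rmult_lt_0_compat; lra. apply A0_ge; auto.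
Qed.

Lemma xi_bound kappa alpha delta eps x xi : 0 < kappa -> 0 < alpha -> delta < 0 -> 0 <= eps -> 0 <= x ->
  delta <= xi < 0 -> rho kappa alpha delta eps xi = x -> - xi <= Rpower (A0 kappa alpha delta x) (- / alpha).
Proof.
  intros hk ha hd he hx hxi hr.
  assert (h := mu_ge_mu0 kappa alpha delta eps x xi hk ha hd he hx hxi hr).
  rewrite mu0_explicit in h by auto. lra.
Qed.

Lemma pow_xi kappa alpha delta eps x xi c : 0 < kappa -> 0 < alpha -> delta < 0 -> 0 <= eps -> 0 <= x ->
  0 <= c -> delta <= xi < 0 -> rho kappa alpha delta eps xi = x ->
  Rpower (- xi) c <= Rpower (A0 kappa alpha delta x) (- / alpha * c).
Proof.
  intros hk ha hd he hx hc hxi hr. rewrite <- Rpower_mult. apply Rle_Rpower_l; auto.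
  split. lra. exact (xi_bound kappa alpha delta eps x xi hk ha hd he hx hxi hr).
Qed.

Lemma locally_neg s : s < 0 -> locally s (fun y : R => y < 0).
Proof.
  intros hs. assert (h : 0 < - s) by lra.
  exists (mkposreal _ h). intros y hy. unfold ball in hy; simpl in hy;
  unfold AbsRing_ball, abs, minus, plus, opp in hy; simpl in hy.
  apply Rabs_def2 in hy. lra.
Qed.

Lemma derive_H0 kappa alpha xi : xi < 0 ->
  Derive (H kappa alpha 0) xi = - (kappa * ((1 + alpha) * Rpower (- xi) alpha)).
Proof.
  intros hxi. apply is_derive_unique.
  apply (is_derive_ext_loc (fun s => kappa * Rpower (- s) (1 + alpha))).
  - generalize (locally_neg xi hxi). apply filter_imp. intros y hy.
    unfold H. rewrite powabs_neg by auto. symmetry; apply Rplus_0_r.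
  - assert (hd := is_derive_scal _ xi kappa _ (derive_pow_neg (1 + alpha) xi hxi)).
    replace (1 + alpha - 1) with alpha in hd by ring.
    replace (- (kappa * ((1 + alpha) * Rpower (- xi) alpha))) with
      (kappa * (- ((1 + alpha) * Rpower (- xi) alpha))) by ring. exact hd.
Qed.

Lemma rho0_upper kappa alpha delta xi : 0 < kappa -> 0 < alpha -> delta <= xi < 0 ->
  rho kappa alpha delta 0 xi <= Rpower (- xi) (- alpha) / (alpha * kappa).
Proof.
  intros hk ha hx. rewrite rho0_formula by auto.
  assert (0 < Rpower (- delta) (- alpha)) by apply Rpower_pos.
  assert (0 < alpha * kappa) by nra.
  unfold Rdiv. apply Rmult_le_compat_r. left; apply Rinv_0_lt_compat; auto. lra.
Qed.

Definition KK kappa alpha := / (alpha * kappa) + 1.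

Lemma eps_bound kappa alpha delta eps x : 0 < kappa -> 0 < alpha -> delta < 0 ->
  0 < eps -> eps <= Rmin 1 (Rpower (- delta) (1 + alpha)) -> 0 <= x ->
  Rbar_lt (Finite x) (ell kappa alpha delta eps) ->
  eps <= Rpower (1 + KK kappa alpha) (1 + / alpha) * Rpower (1 + x) (- (1 + / alpha)).
Proof.
  intros hk ha hd he he0 hx hl.
  assert (he1 := Rmin_l 1 (Rpower (- delta) (1 + alpha))).
  assert (he2 := Rmin_r 1 (Rpower (- delta) (1 + alpha))).
  destruct (mu_pos_spec kappa alpha delta eps x hk ha he hd hx hl) as [_ [_ [xi' [hxi' hr]]]].
  set (p := 1 + alpha) in *.
  set (t := Rpower eps (/ p)).
  assert (ht : 0 < t) by apply Rpower_pos.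
  assert (htd : t <= - delta).
  { unfold t. replace (- delta) with (Rpower (Rpower (- delta) p) (/ p)).
    apply Rle_Rpower_l. left; apply Rinv_0_lt_compat; unfold p; lra. lra.
    rewrite Rpower_mult. replace (p * / p) with 1 by (unfold p; field; lra). apply Rpower_1; lra. }
  assert (hak : 0 < alpha * kappa) by nra.
  assert (hB : rho kappa alpha delta eps xi' <= Rpower t (- alpha) / (alpha * kappa) + t / eps).
  { assert (hte : 0 <= t / eps) by (unfold Rdiv; apply Rmult_le_pos; [lra| left; apply Rinv_0_lt_compat; lra]).
    destruct (Rle_or_lt xi' (- t)) as [h|h].
    - assert (h1 := rho_le_rho0 kappa alpha delta eps xi' hk ha ltac:(lra) ltac:(lra)).
      assert (h2 := rho0_upper kappa alpha delta xi' hk ha ltac:(lra)).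
      assert (h3 : Rpower (- xi') (- alpha) <= Rpower t (- alpha)) by (apply Rpower_neg_anti; lra).
      assert (Rpower (- xi') (- alpha) / (alpha * kappa) <= Rpower t (- alpha) / (alpha * kappa)).
      { unfold Rdiv; apply Rmult_le_compat_r; [left; apply Rinv_0_lt_compat; lra | auto]. }
      lra.
    - assert (e := rho_diff kappa alpha delta eps (- t) xi' hk ha ltac:(lra) ltac:(left; lra)).
      assert (h1 := rho_le_rho0 kappa alpha delta eps (- t) hk ha ltac:(lra) ltac:(lra)).
      assert (h2 := rho0_upper kappa alpha delta (- t) hk ha ltac:(lra)).
      rewrite Ropp_involutive in h2.
      assert (h3 : RInt (fun s => / H kappa alpha eps s) (- t) xi' <= / eps * (xi' - - t)).
      { apply RInt_upper. lra. apply exf; auto; lra. intros s _.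
        apply Rinv_le_contravar; auto. unfold H. assert (0 <= powabs s (1 + alpha)) by apply powabs_ge0. nra. }
      assert (/ eps * (xi' - - t) <= t / eps).
      { unfold Rdiv. rewrite (Rmult_comm t). apply Rmult_le_compat_l. left; apply Rinv_0_lt_compat; lra. lra. }
      lra. }
  set (E := Rpower eps (- (alpha / p))).
  assert (eE1 : Rpower t (- alpha) = E).
  { unfold t, E. rewrite Rpower_mult. replace (/ p * - alpha) with (- (alpha / p)) by (unfold p; field; lra). reflexivity. }
  assert (eE2 : t / eps = E).
  { unfold t, E. replace (- (alpha / p)) with (/ p + - (1)) by (unfold p; field; lra).
    rewrite Rpower_plus, Rpower_Ropp, Rpower_1 by lra. reflexivity. }
  rewrite eE1, eE2 in hB.
  assert (hx2 : x < KK kappa alpha * E) by (unfold KK; lra).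
  assert (hE1 : 1 <= E).
  { unfold E. rewrite <- (Rpower_one_base (- (alpha / p))). apply Rpower_neg_anti.
    unfold p; left; apply Rdiv_lt_0_compat; lra. lra. }
  assert (hK : 0 < KK kappa alpha) by (unfold KK; assert (0 < / (alpha * kappa)) by (apply Rinv_0_lt_compat; lra); lra).
  assert (h1x : 1 + x <= (1 + KK kappa alpha) * E) by nra.
  assert (hEpos : 0 < E) by apply Rpower_pos.
  assert (hc : 0 <= 1 + / alpha) by (assert (0 < / alpha) by (apply Rinv_0_lt_compat; lra); lra).
  assert (hmon := Rpower_neg_anti (1 + x) ((1 + KK kappa alpha) * E) (1 + / alpha) hc ltac:(split; lra)).
  rewrite <- Rpower_mult_distr in hmon by lra.
  assert (eE3 : Rpower E (- (1 + / alpha)) = eps).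
  { unfold E. rewrite Rpower_mult. replace (- (alpha / p) * - (1 + / alpha)) with 1 by (unfold p; field; lra).
    apply Rpower_1; lra. }
  rewrite eE3 in hmon. rewrite Rpower_Ropp in hmon.
  assert (hP : 0 < Rpower (1 + KK kappa alpha) (1 + / alpha)) by apply Rpower_pos.
  apply Rmult_le_compat_l with (r := Rpower (1 + KK kappa alpha) (1 + / alpha)) in hmon; [|lra].
  rewrite <- Rmult_assoc, Rinv_r, Rmult_1_l in hmon by lra. exact hmon.
Qed.

Lemma inv_diff a b e : 0 < b <= a -> 0 <= e -> / a <= / (a + e) + e * / (b * b).
Proof.
  intros hab he.
  assert (eq : / a - / (a + e) = e * / (a * (a + e))) by (field; lra).
  assert (/ (a * (a + e)) <= / (b * b)).
  { apply Rinv_le_contravar. nra. nra. }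
  assert (e * / (a * (a + e)) <= e * / (b * b)) by (apply Rmult_le_compat_l; auto).
  lra.
Qed.

Lemma part1 kappa alpha delta : 0 < kappa -> 0 < alpha -> delta < 0 ->
  forall eta : R, 0 < eta ->
     exists e1 : R, 0 < e1 /\
       forall eps : R, 0 < eps < e1 ->
         forall x : R, 0 <= x -> Rbar_lt (Finite x) (ell kappa alpha delta eps) ->
           Rabs (mu kappa alpha delta eps x - mu kappa alpha delta 0 x) <= eta.
Proof.
  intros hk ha hd eta heta.
  set (c := / (kappa * Rpower (- delta) (1 + alpha) + 1)).
  assert (hc : 0 < c) by (apply Rinv_0_lt_compat, denom_pos; lra).
  set (b := kappa * Rpower eta (1 + alpha)).
  assert (hb : 0 < b) by (assert (0 < Rpower eta (1 + alpha)) by apply Rpower_pos; unfold b; nra).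
  set (k := / (b * b)).
  assert (hkk : 0 < k) by (apply Rinv_0_lt_compat; nra).
  set (M := - delta * k).
  assert (hM : 0 < M) by (unfold M; nra).
  assert (hq : 0 < eta * c / M) by (unfold Rdiv; apply Rmult_lt_0_compat; [nra| apply Rinv_0_lt_compat; auto]).
  exists (Rmin 1 (eta * c / M)). split. apply Rmin_pos; lra.
  intros eps [he1 he2] x hx hl.
  assert (hm1 := Rmin_l 1 (eta * c / M)). assert (hm2 := Rmin_r 1 (eta * c / M)).
  destruct (mu_pos_spec kappa alpha delta eps x hk ha he1 hd hx hl) as [hxi [hr _]].
  destruct (mu0_spec kappa alpha delta x hk ha hd hx) as [hxi0 hr0].
  assert (hge := mu_ge_mu0 kappa alpha delta eps x _ hk ha hd ltac:(lra) hx hxi hr).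
  set (xi := mu kappa alpha delta eps x) in *.
  set (xi0 := mu kappa alpha delta 0 x) in *.
  rewrite Rabs_pos_eq by lra.
  destruct (Rle_or_lt (- eta) xi0) as [h|h]; [lra|].
  destruct (Rle_or_lt (xi - xi0) eta) as [h'|h']; [lra|]. exfalso.
  assert (s1 := rho_strict kappa alpha delta eps xi0 (xi0 + eta) hk ha ltac:(lra) ltac:(lra) ltac:(left; lra)).
  assert (s2 := rho_strict kappa alpha delta eps (xi0 + eta) xi hk ha ltac:(lra) ltac:(lra) ltac:(left; lra)).
  assert (hd1 := denom_pos kappa alpha delta eps hk ltac:(lra)).
  assert (hc' : c <= / (kappa * Rpower (- delta) (1 + alpha) + eps)).
  { unfold c. apply Rinv_le_contravar; auto. lra. }
  assert (hA1 : 0 <= (xi - (xi0 + eta)) * / (kappa * Rpower (- delta) (1 + alpha) + eps)) by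
    (apply Rmult_le_pos; lra).
  assert (hA2 : eta * c <= (xi0 + eta - xi0) * / (kappa * Rpower (- delta) (1 + alpha) + eps)).
  { replace (xi0 + eta - xi0) with eta by ring. apply Rmult_le_compat_l; lra. }
  assert (low : rho kappa alpha delta 0 xi0 <= rho kappa alpha delta eps xi0 + eps * k * (xi0 - delta)).
  { unfold rho.
    replace (eps * k * (xi0 - delta)) with (RInt (fun _ => eps * k) delta xi0)
      by (rewrite RInt_const; unfold scal; simpl; unfold mult; simpl; ring).
    assert (e := RInt_plus (V := R_CompleteNormedModule) (fun s => / H kappa alpha eps s) (fun _ => eps * k) delta xi0
       (exf kappa alpha eps delta xi0 hk ha ltac:(lra) ltac:(left; lra)) (ex_RInt_const _ _ _)).
    unfold plus in e; simpl in e. rewrite <- e.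
    apply RInt_le. lra. apply exf; auto; lra.
    apply (ex_RInt_plus (V := R_CompleteNormedModule) (fun s => / H kappa alpha eps s) (fun _ => eps * k)).
    apply exf; auto; lra. apply ex_RInt_const.
    intros s hs. unfold H. rewrite !powabs_neg by lra. rewrite Rplus_0_r.
    apply inv_diff; [|lra]. split; auto. unfold b. apply Rmult_le_compat_l. lra.
    apply Rle_Rpower_l. lra. split; lra. }
  assert (eps * k * (xi0 - delta) <= eps * M).
  { unfold M. replace (eps * (- delta * k)) with (eps * k * (- delta)) by ring.
    apply Rmult_le_compat_l. nra. lra. }
  assert (eps * M < eta * c).
  { apply Rmult_lt_reg_r with (/ M). apply Rinv_0_lt_compat; auto.
    rewrite Rmult_assoc, Rinv_r, Rmult_1_r by lra. exact (Rlt_le_trans _ _ _ he2 hm2). }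
  lra.
Qed.

Theorem lemma3p1 (kappa alpha delta : R)
  (hkappa : 0 < kappa) (halpha : 0 < alpha) (hdelta : delta < 0) :
  (* 1. sup_{0 <= x < ell_eps} |mu_eps x - mu_0 x| -> 0 as eps -> 0+ *)
  (forall eta : R, 0 < eta ->
     exists e1 : R, 0 < e1 /\
       forall eps : R, 0 < eps < e1 ->
         forall x : R, 0 <= x -> Rbar_lt (Finite x) (ell kappa alpha delta eps) ->
           Rabs (mu kappa alpha delta eps x - mu kappa alpha delta 0 x) <= eta)
  /\
  (* 2. uniform decay bounds *)
  (exists eps0 C1 C2 C3 : R,
     0 < eps0 /\ 0 < C1 /\ 0 < C2 /\ 0 < C3 /\
     forall eps : R, 0 <= eps <= eps0 ->
       forall x : R, 0 <= x -> Rbar_lt (Finite x) (ell kappa alpha delta eps) ->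
         Rabs (mu kappa alpha delta eps x) <= C1 * Rpower (1 + x) (- / alpha) /\
         Rabs (H kappa alpha eps (mu kappa alpha delta eps x))
           <= C2 * Rpower (1 + x) (- 1 - / alpha) /\
         Rabs (Derive (H kappa alpha 0) (mu kappa alpha delta eps x))
           <= C3 * Rpower (1 + x) (- 1)).
Proof.
  split. apply part1; auto.
  set (m := mm kappa alpha delta). assert (hm : 0 < m) by (apply mm_pos; auto).
  assert (hia : 0 < / alpha) by (apply Rinv_0_lt_compat; auto).
  exists (Rmin 1 (Rpower (- delta) (1 + alpha))), (Rpower m (- / alpha)),
    (kappa * Rpower m (- (1 + / alpha)) + Rpower (1 + KK kappa alpha) (1 + / alpha)),
    (kappa * (1 + alpha) * Rpower m (- (1))).
  assert (p1 := Rpower_pos m (- (1 + / alpha))).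
  assert (p2 := Rpower_pos (1 + KK kappa alpha) (1 + / alpha)).
  assert (p3 := Rpower_pos m (- (1))).
  split. apply Rmin_pos. lra. apply Rpower_pos.
  split. apply Rpower_pos.
  split. nra.
  split. apply Rmult_lt_0_compat; [nra|auto].
  intros eps [he0 he1] x hx hl.
  assert (good : delta <= mu kappa alpha delta eps x < 0 /\
                 rho kappa alpha delta eps (mu kappa alpha delta eps x) = x).
  { destruct he0 as [he0|he0].
    - destruct (mu_pos_spec kappa alpha delta eps x hkappa halpha he0 hdelta hx hl) as [a [b _]]. auto.
    - subst eps. apply mu0_spec; auto. }
  destruct good as [hxi hr].
  set (xi := mu kappa alpha delta eps x) in *.
  assert (hpx : 0 < 1 + x) by lra.
  split; [|split].
  - rewrite Rabs_left by lra.
    assert (h1 := xi_bound kappa alpha delta eps x xi hkappa halpha hdelta he0 hx hxi hr).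
    assert (h2 := A0_pow kappa alpha delta x (/ alpha) hkappa halpha hx ltac:(lra)). fold m in h2. lra.
  - assert (hH : 0 <= H kappa alpha eps xi) by (left; apply H_pos; auto; left; lra).
    rewrite Rabs_pos_eq by auto. unfold H. rewrite powabs_neg by lra.
    assert (h1 := pow_xi kappa alpha delta eps x xi (1 + alpha) hkappa halpha hdelta he0 hx ltac:(lra) hxi hr).
    replace (- / alpha * (1 + alpha)) with (- (1 + / alpha)) in h1 by (field; lra).
    assert (h2 := A0_pow kappa alpha delta x (1 + / alpha) hkappa halpha hx ltac:(lra)). fold m in h2.
    replace (- 1 - / alpha) with (- (1 + / alpha)) by ring.
    assert (h3 : eps <= Rpower (1 + KK kappa alpha) (1 + / alpha) * Rpower (1 + x) (- (1 + / alpha))).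
    { destruct he0 as [he0|he0].
      - apply (eps_bound kappa alpha delta); auto.
      - subst eps. assert (0 < Rpower (1 + x) (- (1 + / alpha))) by apply Rpower_pos. nra. }
    assert (hpw := Rpower_pos (1 + x) (- (1 + / alpha))).
    assert (kappa * Rpower (- xi) (1 + alpha) <= kappa * (Rpower m (- (1 + / alpha)) * Rpower (1 + x) (- (1 + / alpha)))).
    { apply Rmult_le_compat_l; lra. }
    nra.
  - rewrite derive_H0 by lra. rewrite Rabs_Ropp. replace (-1) with (- (1)) by ring.
    assert (hp := Rpower_pos (- xi) alpha).
    rewrite Rabs_pos_eq by (apply Rmult_le_pos; [lra| apply Rmult_le_pos; lra]).
    assert (h1 := pow_xi kappa alpha delta eps x xi alpha hkappa halpha hdelta he0 hx ltac:(lra) hxi hr).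
    replace (- / alpha * alpha) with (- (1)) in h1 by (field; lra).
    assert (h2 := A0_pow kappa alpha delta x 1 hkappa halpha hx ltac:(lra)). fold m in h2.
    assert (hpw := Rpower_pos (1 + x) (- (1))).
    assert (Rpower (- xi) alpha <= Rpower m (- (1)) * Rpower (1 + x) (- (1))) by lra.
    assert (0 < kappa * (1 + alpha)) by nra.
    replace (kappa * (1 + alpha) * Rpower m (- (1)) * Rpower (1 + x) (- (1))) with
       (kappa * (1 + alpha) * (Rpower m (- (1)) * Rpower (1 + x) (- (1)))) by ring.
    replace (kappa * ((1 + alpha) * Rpower (- xi) alpha)) with (kappa * (1 + alpha) * Rpower (- xi) alpha) by ring.
    apply Rmult_le_compat_l; lra.
Qed.
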